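(* Consider the domain-incremental setting described in the context, with arbitrary TII, WTP and TAP predictors and an arbitrary measurable weight function $\gamma$. Let $\delta,\epsilon,\eta\ge0$. If $\mathbb{E}_{\boldsymbol{x}\sim\mu}[H^{\gamma}_{\rm WTP}(\boldsymbol{x})]\le\delta$, $\mathbb{E}_{\boldsymbol{x}\sim\mu}[H^{\gamma}_{\rm TII}(\boldsymbol{x})]\le\epsilon$ and $\mathbb{E}_{\boldsymbol{x}\sim\mu}[H_{\rm TAP}(\boldsymbol{x})]\le\eta$, then the loss error satisfies $\mathcal L\in[0,\max\{\delta+\epsilon+\log t,\ \eta\}]$.
   Context: Domain-incremental setting (DIL). Fix integers $t\ge1$ (tasks/domains) and $m\ge1$; every task has the same class set $[m]$. Let $\mu$ be a probability distribution on an input space; each input $\boldsymbol{x}$ has a ground-truth domain $\bar i(\boldsymbol{x})\in[t]$ and a ground-truth class $\bar j(\boldsymbol{x})\in[m]$. A model provides, measurably in $\boldsymbol{x}$: a TII probability distribution $\big(P(\boldsymbol{x}\in\mathcal X_i\mid\mathcal D,\theta)\big)_{i\in[t]}$ on $[t]$; for each $i\in[t]$ a WTP probability distribution $\big(P(\boldsymbol{x}\in\mathcal X_{i,j}\mid\boldsymbol{x}\in\mathcal X_i,\mathcal D,\theta)\big)_{j\in[m]}$ on $[m]$; the induced DIL prediction $P(\boldsymbol{x}\in\mathcal X_{*,j}\mid\mathcal D,\theta)=\sum_{i\in[t]}P(\boldsymbol{x}\in\mathcal X_{i,j}\mid\boldsymbol{x}\in\mathcal X_i,\mathcal D,\theta)\,P(\boldsymbol{x}\in\mathcal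 X_i\mid\mathcal D,\theta)$ for $j\in[m]$; and a TAP probability distribution $\big(P(\boldsymbol{x}\in\mathcal X^{c}\mid\mathcal D,\theta)\big)_{c\in[m]}$ on $[m]$ (produced separately). A weight function $\gamma$ assigns to each $\boldsymbol{x}$ a point $\gamma(\boldsymbol{x})=(\gamma_i)_{i\in[t]}$ of the probability simplex on $[t]$. With conventions $-\log0=+\infty$ and $0\cdot(+\infty)=0$, define $H^{\gamma}_{\rm WTP}(\boldsymbol{x})=-\sum_{i}\gamma_i\log P(\boldsymbol{x}\in\mathcal X_{i,\bar j}\mid\boldsymbol{x}\in\mathcal X_i,\mathcal D,\theta)$, $H^{\gamma}_{\rm TII}(\boldsymbol{x})=-\sum_i\gamma_i\log P(\boldsymbol{x}\in\mathcal X_i\mid\mathcal D,\theta)$, $H_{\rm TAP}(\boldsymbol{x})=-\log P(\boldsymbol{x}\in\mathcal X^{\bar j}\mid\mathcal D,\theta)$, where $\bar j=\bar j(\boldsymbol{x})$. The loss error is $\mathcal L=\max\{\mathbb{E}_{\boldsymbol{x}\sim\mu}[-\log P(\boldsymbol{x}\in\mathcal X_{*,\bar j}\mid\mathcal D,\theta)],\ \mathbb{E}_{\boldsymbol{x}\sim\mu}[H_{\rm TAP}(\boldsymbol{x})]\}$. *)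

(* Defs.v *)
From HB Require Import structures.
From mathcomp Require Import all_boot all_order all_algebra.
From mathcomp Require Import all_classical all_reals all_analysis.
Set Implicit Arguments. Unset Strict Implicit. Unset Printing Implicit Defensive.
Import Order.TTheory GRing.Theory Num.Theory.
Local Open Scope ring_scope.
Local Open Scope ereal_scope.

Definition neglog {R : realType} (p : R) : \bar R :=
  if p == 0%R then +oo else (- ln p)%:E.

Definition is_distr {R : realType} (I : finType) (p : I -> R) : Prop :=
  (forall i, 0 <= p i)%R /\ (\sum_(i : I) p i = 1)%R.

(* DIL prediction P(x in X_{*,j}) = sum_i WTP(j|i) TII(i) *)
Definition dil_pred {R : realType} {T : Type} (t m : nat)
  (TII : T -> 'I_t -> R) (WTP : T -> 'I_t -> 'I_m -> R) (x : T) (j : 'I_m) : R :=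
  (\sum_(i < t) WTP x i j * TII x i)%R.

(* H^gamma_WTP(x); in \bar R, 0 * +oo = 0 *)
Definition H_WTP {R : realType} {T : Type} (t m : nat)
  (WTP : T -> 'I_t -> 'I_m -> R) (gamma : T -> 'I_t -> R) (jbar : T -> 'I_m)
  (x : T) : \bar R :=
  \sum_(i < t) ((gamma x i)%:E * neglog (WTP x i (jbar x))).

Definition H_TII {R : realType} {T : Type} (t : nat)
  (TII : T -> 'I_t -> R) (gamma : T -> 'I_t -> R) (x : T) : \bar R :=
  \sum_(i < t) ((gamma x i)%:E * neglog (TII x i)).

Definition H_TAP {R : realType} {T : Type} (m : nat)
  (TAP : T -> 'I_m -> R) (jbar : T -> 'I_m) (x : T) : \bar R :=
  neglog (TAP x (jbar x)).

Definition loss_error {R : realType} {d : measure_display} {T : measurableType d}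
  (mu : probability T R) (t m : nat)
  (TII : T -> 'I_t -> R) (WTP : T -> 'I_t -> 'I_m -> R) (TAP : T -> 'I_m -> R)
  (jbar : T -> 'I_m) : \bar R :=
  maxe (\int[mu]_x neglog (dil_pred TII WTP x (jbar x)))
       (\int[mu]_x H_TAP TAP jbar x).

(* Main.v *)
Require Import Defs.
From HB Require Import structures.
From mathcomp Require Import all_boot all_order all_algebra.
From mathcomp Require Import all_classical all_reals all_analysis.
From mathcomp Require Import measurable_realfun.
Import Order.TTheory GRing.Theory Num.Theory.
Local Open Scope ring_scope.
Local Open Scope classical_set_scope.

Section Aux.
Context {R : realType}.
Local Open Scope ereal_scope.

Lemma neglog_ge0 (p : R) : (p <= 1)%R -> 0 <= neglog p.
Proof.
move=> p1; rewrite /neglog; case: eqP => // _.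
by rewrite lee_fin oppr_ge0 ln_le0.
Qed.

Lemma neglog_anti (p q : R) : (0 <= p)%R -> (p <= q)%R -> neglog q <= neglog p.
Proof.
move=> p0 pq; rewrite /neglog.
case: (eqVneq p 0%R) => [_|pn0]; first exact: leey.
have pp : (0 < p)%R by rewrite lt_def pn0.
have qp : (0 < q)%R by apply: lt_le_trans pq.
rewrite (gt_eqF qp) lee_fin lerN2 ler_ln ?posrE//.
Qed.

Lemma neglogM (a b : R) : (0 <= a)%R -> (0 <= b)%R ->
  neglog (a * b) = neglog a + neglog b.
Proof.
move=> a0 b0; rewrite /neglog.
case: (eqVneq a 0%R) => [->|an0]; first by rewrite mul0r eqxx addye //; case: ifP.
case: (eqVneq b 0%R) => [->|bn0]; first by rewrite mulr0 eqxx addey.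
have ap : (0 < a)%R by rewrite lt_def an0.
have bp : (0 < b)%R by rewrite lt_def bn0.
rewrite mulf_eq0 (negbTE an0) (negbTE bn0) /= lnM ?posrE// -EFinD opprD.
by [].
Qed.

Lemma key (t : nat) (i1 : 'I_t) (c g : 'I_t -> R) :
  (forall i, 0 <= c i)%R -> is_distr g ->
  neglog (\sum_i c i)%R <= \sum_i (g i)%:E * neglog (c i).
Proof.
move=> c0 [g0 g1].
have [i0 _ Hmin] := @arg_minP _ _ _ i1 xpredT (fun i => neglog (c i)) isT.
apply: (@le_trans _ _ (neglog (c i0))).
  apply: neglog_anti => //.
  by rewrite (bigD1 i0)//= lerDl sumr_ge0.
apply: (@le_trans _ _ (\sum_i (g i)%:E * neglog (c i0))).
  rewrite -ge0_sume_distrl; last by move=> i _; rewrite lee_fin.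
  by rewrite sumEFin g1 mul1e.
apply: lee_sum => i _; apply: lee_wpmul2l; first by rewrite lee_fin.
exact: Hmin.
Qed.

End Aux.

Lemma distr_le1 {R : realType} (I : finType) (p : I -> R) (j : I) :
  is_distr p -> (p j <= 1)%R.
Proof.
move=> [p0 p1]; rewrite -p1 (bigD1 j)//= lerDl sumr_ge0 // => i _; exact: p0.
Qed.

Arguments distr_le1 {R I p} j.

Section Meas.
Context {R : realType} {d : measure_display} {T : measurableType d}.
Local Open Scope ereal_scope.

Lemma mneglog (f : T -> R) : measurable_fun setT f ->
  measurable_fun [set: T] (fun x => neglog (f x) : \bar R).
Proof.
move=> mf; rewrite /neglog; apply: measurable_fun_ifT.
- exact: measurable_fun_eqr.
- exact: measurable_cst.
- apply/measurable_EFinP; apply: measurableT_comp => //.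
  exact: measurableT_comp (@measurable_ln R) mf.
Qed.

Lemma mcomp_idx (m : nat) (jbar : T -> 'I_m) (F : T -> 'I_m -> R) :
  (forall j, measurable (jbar @^-1` [set j])) ->
  (forall j, measurable_fun setT (fun x => F x j)) ->
  measurable_fun setT (fun x => F x (jbar x)).
Proof.
move=> mj mF.
have -> : (fun x => F x (jbar x)) =
  (fun x => \sum_(j <- enum 'I_m) (if jbar x == j then F x j else 0%R))%R.
  apply/funext => x; rewrite big_enum /= (bigD1 (jbar x))//= eqxx big1 ?addr0//.
  by move=> j /negbTE; rewrite eq_sym => ->.
apply: measurable_sum => j.
have mb : measurable_fun [set: T] (fun x => jbar x == j).
  apply: (@measurable_fun_bool _ _ _ _ true).
  rewrite setTI; have -> : (fun x => jbar x == j) @^-1` [set true] = jbar @^-1` [set j].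
    by apply/seteqP; split => x /= /eqP.
  exact: mj.
apply: measurable_fun_ifT => //.
Qed.

End Meas.

Theorem theorem4 (R : realType) (d : measure_display) (T : measurableType d)
  (mu : probability T R) (t m : nat) (ht : (1 <= t)%N) (hm : (1 <= m)%N)
  (ibar : T -> 'I_t) (jbar : T -> 'I_m)
  (TII : T -> 'I_t -> R) (WTP : T -> 'I_t -> 'I_m -> R) (TAP : T -> 'I_m -> R)
  (gamma : T -> 'I_t -> R)
  (mibar : forall i, measurable (ibar @^-1` [set i]))
  (mjbar : forall j, measurable (jbar @^-1` [set j]))
  (mTII : forall i, measurable_fun setT (fun x => TII x i))
  (mWTP : forall i j, measurable_fun setT (fun x => WTP x i j))
  (mTAP : forall j, measurable_fun setT (fun x => TAP x j))
  (mgamma : forall i, measurable_fun setT (fun x => gamma x i))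
  (dTII : forall x, is_distr (TII x))
  (dWTP : forall x i, is_distr (WTP x i))
  (dTAP : forall x, is_distr (TAP x))
  (dgamma : forall x, is_distr (gamma x))
  (delta eps eta : R) (hdelta : 0 <= delta) (heps : 0 <= eps) (heta : 0 <= eta) :
  (\int[mu]_x H_WTP WTP gamma jbar x <= delta%:E)%E ->
  (\int[mu]_x H_TII TII gamma x <= eps%:E)%E ->
  (\int[mu]_x H_TAP TAP jbar x <= eta%:E)%E ->
  (0 <= loss_error mu TII WTP TAP jbar)%E /\
  (loss_error mu TII WTP TAP jbar <= maxe (delta + eps + ln t%:R)%:E eta%:E)%E.
Proof.
move=> hW hT hP.
have i1 : 'I_t := Ordinal ht.
set f := fun x => neglog (dil_pred TII WTP x (jbar x)).
have dle1 x : (dil_pred TII WTP x (jbar x) <= 1)%R.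
  case: (dTII x) => T0 T1; rewrite /dil_pred -T1; apply: ler_sum => i _.
  by rewrite ler_piMl // (distr_le1 _ (dWTP x i)).
have f0 x : (0 <= f x)%E by apply: neglog_ge0.
have mWj i : measurable_fun setT (fun x => WTP x i (jbar x)).
  by apply: (@mcomp_idx _ _ _ _ jbar (fun x j => WTP x i j) mjbar) => j; exact: mWTP.
have mf : measurable_fun setT f.
  apply: mneglog; rewrite /dil_pred; apply: measurable_sum => i.
  exact: measurable_funM.
have mHW : measurable_fun setT (H_WTP WTP gamma jbar).
  rewrite /H_WTP; apply: emeasurable_sum => i; apply: emeasurable_funM.
    exact/measurable_EFinP.
  exact: mneglog.
have mHT : measurable_fun setT (H_TII TII gamma).
  rewrite /H_TII; apply: emeasurable_sum => i; apply: emeasurable_funM.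
    exact/measurable_EFinP.
  exact: mneglog.
have HW0 x : (0 <= H_WTP WTP gamma jbar x)%E.
  apply: sume_ge0 => i _; apply: mule_ge0; first by rewrite lee_fin; case: (dgamma x).
  exact/neglog_ge0/(distr_le1 _ (dWTP x i)).
have HT0 x : (0 <= H_TII TII gamma x)%E.
  apply: sume_ge0 => i _; apply: mule_ge0; first by rewrite lee_fin; case: (dgamma x).
  exact/neglog_ge0/(distr_le1 _ (dTII x)).
have pw x : (f x <= H_WTP WTP gamma jbar x + H_TII TII gamma x)%E.
  rewrite /f /dil_pred.
  have c0 : forall i, (0 <= WTP x i (jbar x) * TII x i)%R.
    by move=> i; apply: mulr_ge0; [case: (dWTP x i) | case: (dTII x)].
  apply: (le_trans (@key _ _ i1 (fun i => WTP x i (jbar x) * TII x i)%R (gamma x) c0 (dgamma x))).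
  rewrite /H_WTP /H_TII -big_split /=; apply: lee_sum => i _.
  have g0 : (0 <= (gamma x i)%:E)%E by rewrite lee_fin; case: (dgamma x).
  rewrite neglogM; [|by case: (dWTP x i)|by case: (dTII x)].
  rewrite ge0_muleDr //; apply: neglog_ge0.
    exact: (distr_le1 _ (dWTP x i)).
  exact: (distr_le1 _ (dTII x)).
have lnt : (0 <= ln (t%:R : R))%R by apply: ln_ge0; rewrite ler1n.
have I1 : (\int[mu]_x f x <= (delta + eps + ln t%:R)%:E)%E.
  apply: (@le_trans _ _ (\int[mu]_x (H_WTP WTP gamma jbar x + H_TII TII gamma x))%E).
    apply: ge0_le_integral => //.
    exact: emeasurable_funD.
  rewrite (@ge0_integralD _ _ _ mu setT measurableT (H_WTP WTP gamma jbar) (H_TII TII gamma)) //.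
  rewrite !EFinD; apply: lee_paddr; first by rewrite lee_fin.
  exact: leeD.
split.
  rewrite /loss_error le_max; apply/orP; left.
  by apply: integral_ge0 => x _; apply: f0.
rewrite /loss_error; apply: le_max2 => //.
Qed.
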